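(* Let $G$ be a finite group and let $V=\{1,v_1,v_2,v_3\}$ be a four-group acting on $G$ by automorphisms with $C_G(V)=1$. Put $G_3=C_G(v_3)$. Suppose that $N$ is a normal subgroup of $G$ such that $N\leq G_3$. Then $N\leq Z(G)$.
   Context: $C_G(V)$ is the subgroup of elements fixed by all of $V$, $C_G(v_3)$ the subgroup fixed by $v_3$, and $Z(G)$ the center of $G$. *)

(* Defs.v *)
From mathcomp Require Import all_boot all_fingroup all_solvable.
Set Implicit Arguments.
Unset Strict Implicit.
Unset Printing Implicit Defensive.

(* Main.v *)
Require Import Defs.
From mathcomp Require Import all_boot all_fingroup all_solvable.
Set Implicit Arguments.
Unset Strict Implicit.
Unset Printing Implicit Defensive.
Local Open Scope group_scope.

Section L48.
Variables (gT aT : finGroupType) (G : {group gT}) (V : {group aT}).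
Variable to : groupAction V G.
Hypothesis V2 : 2.-group V.
Hypothesis CV1 : 'C_(G | to)(V) = 1.

Lemma fixS_mod (S : {set gT}) : S \subset G ->
  (forall x a, x \in S -> a \in V -> to x a \in S) ->
  #|S| = #|'Fix_(S | to)(V)| %[mod 2] /\ 'Fix_(S | to)(V) \subset [1].
Proof.
move=> sSG stS; have actsS : [acts V, on S | to].
  apply/subsetP => a Va; rewrite !inE Va /=.
  by apply/subsetP => x Sx; rewrite inE; apply: stS.
split; first exact: pgroup_fix_mod V2 actsS.
rewrite -(subgacentE to (subxx V) sSG) -CV1.
by apply: setSI.
Qed.

Lemma oddG : odd #|G|.
Proof.
have [] := @fixS_mod G (subxx _).
  by move=> x a Gx Va; rewrite (gact_stable to Va).
move=> e _; have := modn2 #|G|.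
by rewrite e -(subgacentE to (subxx V) (subxx G)) CV1 cards1; case: (odd _).
Qed.

Lemma one_in (S : {set gT}) : S \subset G ->
  (forall x a, x \in S -> a \in V -> to x a \in S) -> odd #|S| -> 1 \in S.
Proof.
move=> sSG stS oS; have [e s1] := fixS_mod sSG stS.
have : #|'Fix_(S | to)(V)| != 0.
  apply: contraTneq oS => e0; have := modn2 #|S|.
  by rewrite e e0; case: (odd _).
rewrite cards_eq0 => /set0Pn[x Fx].
have := subsetP s1 x Fx; rewrite inE => /eqP x1.
by move: Fx; rewrite x1 inE => /andP[].
Qed.

End L48.
Section Main.
Variables (gT aT : finGroupType) (G : {group gT}) (V : {group aT}).
Variable to : groupAction V G.
Variable v3 : aT.
Hypothesis V4 : #|V| = 4%N.
Hypothesis Vsq : forall v, v \in V -> v ^+ 2 = 1.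
Hypothesis Vv3 : v3 \in V.
Hypothesis v3n1 : v3 != 1.
Hypothesis CV1 : 'C_(G | to)(V) = 1.

Lemma invV a : a \in V -> a^-1 = a.
Proof. by move=> Va; apply/eqP; rewrite eq_invg_mul -(expgS a 1) Vsq. Qed.

Lemma VV a : a \in V -> a * a = 1.
Proof. by move=> Va; rewrite -(expgS a 1) Vsq. Qed.

Lemma Vcomm a b : a \in V -> b \in V -> a * b = b * a.
Proof.
move=> Va Vb; rewrite -[a * b]invV ?groupM // invMg !invV //.
Qed.

Lemma fix3 z w : z \in G -> w \in V -> w != 1 -> w != v3 ->
  to z w = z -> to z v3 = z -> z = 1.
Proof.
move=> Gz Vw w1 w3 zw zv3.
pose H := 'C_V[z | to]%G.
have memH a : a \in V -> (a \in H) = (to z a == z).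
  by move=> Va; rewrite !inE Va /= sub1set inE.
have sHV : H \subset V by apply: subsetIl.
have s3 : 1 |: (w |: [set v3]) \subset H.
  apply/subsetP => a /setU1P[->|/setU1P[->|/set1P->]].
  - by rewrite memH // act1.
  - by rewrite memH // zw.
  by rewrite memH // zv3.
have c3 : #|1 |: (w |: [set v3])| = 3%N.
  rewrite !cardsU1 cards1 !inE (eq_sym 1 w) (negPf w1) (eq_sym 1 v3) (negPf v3n1).
  by rewrite (negPf w3).
have cH : #|H| = 4%N.
  have d := cardSg sHV; have l := subset_leq_card sHV; have g := subset_leq_card s3.
  rewrite V4 c3 in d l g; move: d l g.
  by case: #|H| => [|[|[|[|[|n]]]]].
have eHV : H :==: V by rewrite eqEcard sHV cH V4.
have : z \in 'C_(G | to)(V).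
  rewrite (subgacentE to (subxx V) (subxx G)) inE Gz.
  apply/afixP => a Va.
  by apply/eqP; rewrite -memH // (eqP eHV).
by rewrite CV1 inE => /eqP.
Qed.

Lemma main48 (N : {group gT}) : N <| G -> N \subset 'C_(G | to)[v3] ->
  N \subset 'Z(G).
Proof.
move=> nNG sNC.
have V2 : 2.-group V by rewrite /pgroup V4.
have oG := oddG V2 CV1.
have gst a x : a \in V -> x \in G -> to x a \in G.
  by move=> Va Gx; rewrite (gact_stable to Va).
pose K := [set x in G | [forall g in G, to (x ^ g) v3 == x ^ g]].
have memK x : reflect (x \in G /\ forall g, g \in G -> to (x ^ g) v3 = x ^ g)
    (x \in K).
  rewrite inE; apply: (iffP andP) => [[Gx /forall_inP H]|[Gx H]]; split => //.
    by move=> g Gg; apply/eqP; apply: H.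
  by apply/forall_inP => g Gg; apply/eqP; apply: H.
have KG x : x \in K -> x \in G by case/memK.
have Kfix x : x \in K -> to x v3 = x.
  by case/memK => _ H; have := H 1 (group1 _); rewrite conjg1.
have KJ x g : x \in K -> g \in G -> x ^ g \in K.
  case/memK => Gx H Gg; apply/memK; split; first by rewrite groupJ.
  by move=> h Gh; rewrite -conjgM H // groupM.
have KM x y : x \in K -> y \in K -> x * y \in K.
  move=> Kx Ky; have Gx := KG _ Kx; have Gy := KG _ Ky.
  apply/memK; split; first by rewrite groupM.
  move=> g Gg; rewrite conjMg gactM ?groupJ //.
  by rewrite !Kfix ?KJ.
have KV x : x \in K -> x^-1 \in K.
  move=> Kx; have Gx := KG _ Kx.
  apply/memK; split; first by rewrite groupV.
  move=> g Gg; rewrite conjVg gactV ?groupJ //.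
  by rewrite !Kfix ?KJ.
have KA x a : x \in K -> a \in V -> to x a \in K.
  move=> Kx Va; have Gx := KG _ Kx.
  apply/memK; split; first by rewrite gst.
  move=> g Gg; pose g' := to g a^-1.
  have Gg' : g' \in G by rewrite gst ?groupV.
  have eg : g = to g' a by rewrite /g' actKVin.
  have Kxg : x ^ g' \in K by rewrite KJ.
  rewrite eg -gactJ // -actMin // Vcomm // actMin // Kfix //.
have Kinv w : w \in V -> w != 1 -> w != v3 -> forall k, k \in K -> to k w = k^-1.
  move=> Vw w1 w3.
  pose f x := x^-1 * to x w.
  have finj : {in K &, injective f}.
    move=> x y Kx Ky e; have Gx := KG _ Kx; have Gy := KG _ Ky.
    have e2 : to y w = y * x^-1 * to x w by rewrite -mulgA /f in e *; rewrite e mulKVg.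
    have Kz : y * x^-1 \in K by rewrite KM ?KV.
    have zw : to (y * x^-1) w = y * x^-1.
      by rewrite gactM ?groupV // gactV // e2 mulgK.
    have := fix3 (KG _ Kz) Vw w1 w3 zw (Kfix _ Kz).
    by move/eqP; rewrite -eq_mulgV1 => /eqP.
  have fK : f @: K = K.
    apply/eqP; rewrite eqEcard card_in_imset // leqnn andbT.
    by apply/subsetP => _ /imsetP[x Kx ->]; rewrite KM ?KV ?KA.
  move=> k; rewrite -fK => /imsetP[x Kx ->]; have Gx := KG _ Kx.
  rewrite /f gactM ?groupV ?gst // gactV // -actMin // VV // act1.
  by rewrite invMg invgK.
pose C := 'C_G(K)%G.
have Cg w g : w \in V -> w != 1 -> w != v3 -> g \in G -> to g w * g^-1 \in C.
  move=> Vw w1 w3 Gg; rewrite inE groupM ?groupV ?gst //=.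
  apply/centP => k Kk; have Gk := KG _ Kk.
  have key : k ^ g = k ^ to g w.
    have Kn : (k^-1) ^ g \in K by rewrite KJ ?KV.
    have := Kinv w Vw w1 w3 _ Kn.
    by rewrite gactJ ?groupV // Kinv ?KV // invgK -conjVg invgK => ->.
  apply: commute_sym; apply/commgP/conjg_fixP.
  by rewrite conjgM -key conjgK.
have Cv3 g : g \in G -> to g v3 * g^-1 \in C.
  move=> Gg.
  have : V :\: (1 |: [set v3]) != set0.
    apply: contraTneq isT => /eqP; rewrite setD_eq0 => /subset_leq_card.
    by rewrite V4 cardsU1 cards1; case: (_ \notin _).
  case/set0Pn => w1 Hw1.
  have Vw1 : w1 \in V by case/setDP: Hw1.
  have [w11 w13] : w1 != 1 /\ w1 != v3.
    by move: Hw1; rewrite !inE negb_or => /andP[/andP[]].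
  have Vw2 : w1 * v3 \in V by rewrite groupM.
  have w21 : w1 * v3 != 1.
    by rewrite -{1}(invV Vv3) -eq_mulgV1.
  have w23 : w1 * v3 != v3.
    by rewrite -{2}[v3]mul1g (inj_eq (mulIg v3)).
  have Gg1 : to g w1 \in G by rewrite gst.
  have -> : to g v3 = to (to g w1) (w1 * v3).
    by rewrite -actMin // mulgA VV // mul1g.
  have -> : to (to g w1) (w1 * v3) * g^-1 =
    (to (to g w1) (w1 * v3) * (to g w1)^-1) * (to g w1 * g^-1).
    by rewrite mulgA mulgVK.
  by rewrite groupM ?Cg.
have Call a g : a \in V -> g \in G -> to g a * g^-1 \in C.
  move=> Va Gg; have [->|a1] := eqVneq a 1; first by rewrite act1 mulgV group1.
  have [->|a3] := eqVneq a v3; first exact: Cv3.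
  exact: Cg.
have CA c a : c \in C -> a \in V -> to c a \in C.
  move=> Cc Va; have Gc : c \in G by case/setIP: Cc.
  have cK : c \in 'C(K) by case/setIP: Cc.
  rewrite inE gst //=; apply/centP => k Kk.
  have Kk' : to k a^-1 \in K by rewrite KA ?groupV.
  have Gk' := KG _ Kk'.
  have ek : k = to (to k a^-1) a by rewrite actKVin.
  rewrite ek /commute -!gactM //.
  by rewrite (centP cK _ Kk').
have allC g : g \in G -> g \in C.
  move=> Gg; pose S := C :* g.
  have sSG : S \subset G.
    apply/subsetP => x; rewrite mem_rcoset => Cx.
    rewrite -(mulgVK g x) groupM //; by case/setIP: Cx.
  have stS x a : x \in S -> a \in V -> to x a \in S.
    rewrite mem_rcoset => Cx Va.
    have Gx : x \in G by rewrite (subsetP sSG) // mem_rcoset.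
    have Gxg : x * g^-1 \in G by rewrite groupM ?groupV.
    by rewrite mem_rcoset -{1}(mulgVK g x) gactM // -mulgA groupM ?CA ?Call.
  have oS : odd #|S|.
    rewrite card_rcoset; apply: dvdn_odd oG; apply: cardSg; exact: subsetIl.
  have := one_in V2 CV1 sSG stS oS.
  by rewrite mem_rcoset mul1g groupV.
apply/subsetP => n Nn.
have Gn : n \in G by rewrite (subsetP (normal_sub nNG)).
have Kn : n \in K.
  apply/memK; split => // g Gg.
  have Nng : n ^ g \in N by rewrite memJ_norm // (subsetP (normal_norm nNG)).
  have := subsetP sNC _ Nng; rewrite subgacent1E // inE => /andP[_].
  by move/afix1P.
rewrite inE Gn /=; apply/centP => g Gg.
have : g \in 'C(K) by case/setIP: (allC g Gg).
by move/centP => /(_ n Kn) /commute_sym.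
Qed.
End Main.

Theorem lemma4p8 (gT aT : finGroupType) (G : {group gT}) (V : {group aT})
    (to : groupAction V G) (v3 : aT) (N : {group gT}) :
  #|V| = 4%N ->
  (forall v, v \in V -> v ^+ 2 = 1) ->
  v3 \in V -> v3 != 1 ->
  'C_(G | to)(V) = 1 ->
  N <| G ->
  N \subset 'C_(G | to)[v3] ->
  N \subset 'Z(G).
Proof.
move=> V4 Vsq Vv3 v3n1 CV1 nNG sNC.
exact: (main48 V4 Vsq Vv3 v3n1 CV1 nNG sNC).
Qed.
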